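(* Under the standing assumptions below, $W$ is a Foster–Lyapunov function: for every $\eta\in\Theta$, $$LW(\eta)\le\mathbf b\langle h\rangle-\tfrac12W(\eta),$$ where $\langle h\rangle=\int_{\mathbb R^d}h(x)dx$.
   Context: Fix $d\in\mathbb N$, $\varepsilon>0$, $G(x)=(1+|x|)^{-d-\varepsilon}$. $\Gamma$ is the set of locally finite subsets of $\mathbb R^d$; $\Gamma_G=\{\gamma\in\Gamma:\sum_{x\in\gamma}G(x)<\infty\}$. Let $b:\mathbb R^d\times\Gamma_G\to[0,\infty)$ be measurable with $\mathbf b:=\sup_{x,\eta}b(x,\eta)<\infty$. The operator $L$ acts on functions $F$ on configurations by $$LF(\eta)=\sum_{x\in\eta}\bigl(F(\eta\setminus\{x\})-F(\eta)\bigr)+\int_{\mathbb R^d}b(x,\eta)\bigl(F(\eta\cup\{x\})-F(\eta)\bigr)dx.$$ Let $K:(0,\infty)\to(0,\infty)$ be non-increasing with $\lim_{q\to0+}K(q)=\infty$ and $\int_r^\infty K(q)q^{d-1}dq<\infty$ for every $r>0$. Let $\phi,h:\mathbb R^d\to(0,\infty)$ be measurable, separated from $0$ on every compact set, with $C_1:=\sup_{x}\int_{\mathbb R^d}\phi(y)K(|x-y|)dy<\infty$ and $2C_1\mathbf b\,\phi(x)\le h(x)\le G(x)$ for all $x$. Set $\psi(x,y)=\phi(x)\phi(y)K(|x-y|)$ ($x\ne y$), $V(\eta)=\sum_{\{x,y\}\subset\eta}\psi(x,y)$ (sum over unordered pairs of distinct points), $\langle h,\eta\rangle=\sum_{x\in\eta}h(x)$,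 $W(\eta)=\langle h,\eta\rangle+V(\eta)\in[0,\infty]$, and $\Theta=\{\eta\in\Gamma_G:V(\eta)<\infty\}$. *)

(* Defs.v *)
From HB Require Import structures.
From mathcomp Require Import all_boot all_order all_algebra.
From mathcomp Require Import all_classical all_reals all_analysis.
Set Implicit Arguments.
Unset Strict Implicit.
Unset Printing Implicit Defensive.
Import Order.TTheory GRing.Theory Num.Theory.
Import numFieldNormedType.Exports.
Local Open Scope classical_set_scope.
Local Open Scope ring_scope.

Section Defs.
Variables (R : realType) (d : nat).

(* points of R^d are d-tuples of reals (measurable structure: product of Borel) *)
Definition Rd := d.-tuple R.

Definition enorm (x : Rd) : R := Num.sqrt (\sum_(i < d) (tnth x i) ^+ 2).
Definition edist (x y : Rd) : R :=
  Num.sqrt (\sum_(i < d) (tnth x i - tnth y i) ^+ 2).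

(* Lebesgue measure on R^d, characterised by its values on closed boxes *)
Definition is_lebesgue_Rd (mu : {measure set Rd -> \bar R}) : Prop :=
  forall a b : Rd, (forall i, tnth a i <= tnth b i) ->
    mu [set x : Rd | forall i, tnth a i <= tnth x i <= tnth b i]
    = (\prod_(i < d) (tnth b i - tnth a i))%:E.

(* locally finite configurations: finitely many points in every ball *)
Definition Gamma : set (set Rd) :=
  [set eta | forall r : R, finite_set (eta `&` [set x | enorm x <= r])].

Definition Gfun (eps : R) (x : Rd) : R := (1 + enorm x) `^ (- (d%:R + eps)).

Definition GammaG (eps : R) : set (set Rd) :=
  [set eta | Gamma eta /\ (\esum_(x in eta) (Gfun eps x)%:E < +oo)%E].

Definition ssum (T : choiceType) (D : set T) (f : T -> \bar R) : \bar R :=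
  (\esum_(x in D) (f^\+ x) - \esum_(x in D) (f^\- x))%E.

Definition psi (phi : Rd -> R) (K : R -> R) (x y : Rd) : R :=
  phi x * phi y * K (edist x y).

(* V(eta) = sum over unordered pairs {x,y} of distinct points
          = 1/2 * sum over ordered pairs (x,y), x <> y (psi is symmetric) *)
Definition Vfun (phi : Rd -> R) (K : R -> R) (eta : set Rd) : \bar R :=
  ((2^-1)%:E * \esum_(p in [set p : Rd * Rd | eta p.1 /\ eta p.2 /\ p.1 <> p.2])
      (psi phi K p.1 p.2)%:E)%E.

Definition pairing (h : Rd -> R) (eta : set Rd) : \bar R :=
  \esum_(x in eta) (h x)%:E.

Definition Wfun (h phi : Rd -> R) (K : R -> R) (eta : set Rd) : \bar R :=
  (pairing h eta + Vfun phi K eta)%E.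

Definition Theta (eps : R) (phi : Rd -> R) (K : R -> R) : set (set Rd) :=
  [set eta | GammaG eps eta /\ (Vfun phi K eta < +oo)%E].

Definition Lgen (mu : {measure set Rd -> \bar R}) (b : Rd -> set Rd -> R)
  (F : set Rd -> \bar R) (eta : set Rd) : \bar R :=
  (ssum eta (fun x => F (eta `\ x) - F eta)
   + \int[mu]_x ((b x eta)%:E * (F (eta `|` [set x]) - F eta)))%E.

Definition bsup (eps : R) (b : Rd -> set Rd -> R) : \bar R :=
  ereal_sup [set e | exists x eta, GammaG eps eta /\ e = (b x eta)%:E].

Definition C1 (mu : {measure set Rd -> \bar R}) (phi : Rd -> R) (K : R -> R) : \bar R :=
  ereal_sup [set e | exists x : Rd,
     e = (\int[mu]_y (phi y * K (edist x y))%:E)%E].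

End Defs.

(* Main.v *)
Require Import Defs.
From HB Require Import structures.
From mathcomp Require Import all_boot all_order all_algebra.
From mathcomp Require Import all_classical all_reals all_analysis.
From mathcomp Require Import measurable_realfun.
From mathcomp Require Import ring lra.
Import Order.TTheory GRing.Theory Num.Theory.
Import numFieldNormedType.Exports.
Local Open Scope classical_set_scope.
Local Open Scope ring_scope.

Section Aux.
Variables (R : realType) (d : nat).
Local Notation Rd := (Defs.Rd R d).

Lemma edist_sym (x y : Rd) : Defs.edist x y = Defs.edist y x.
Proof.
rewrite /Defs.edist; congr Num.sqrt; apply: eq_bigr => i _.
by rewrite -sqrrN opprB.
Qed.

Lemma edist_ge0 (x y : Rd) : 0 <= Defs.edist x y.
Proof. exact: sqrtr_ge0. Qed.

Lemma edist_eq0 (x y : Rd) : Defs.edist x y = 0 -> x = y.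
Proof.
rewrite /Defs.edist => /eqP; rewrite sqrtr_eq0 => H.
have H0 : \sum_(i < d) (tnth x i - tnth y i) ^+ 2 = 0.
  by apply/eqP; rewrite eq_le H sumr_ge0// => i _; exact: sqr_ge0.
apply: eq_from_tnth => i.
have := @psumr_eq0P _ _ xpredT (fun i => (tnth x i - tnth y i) ^+ 2) (fun i _ => sqr_ge0 _) H0 i isT.
by move/eqP; rewrite sqrf_eq0 subr_eq0 => /eqP.
Qed.

Lemma edistxx (x : Rd) : Defs.edist x x = 0.
Proof. by rewrite /Defs.edist big1 ?sqrtr0// => i _; rewrite subrr expr0n. Qed.

Lemma measurable_edist (y : Rd) : measurable_fun setT (fun x : Rd => Defs.edist x y).
Proof.
rewrite /Defs.edist.
apply: (measurableT_comp (measurable_realfun.continuous_measurable_fun (@sqrt_continuous R))).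
apply: measurable_sum => i.
apply: measurable_realfun.measurable_funX; apply: measurable_funB => //.
exact: measurable_tnth.
Qed.

End Aux.
Section Kz.
Variable (R : realType).

Definition Kz (K : R -> R) (q : R) : R := if 0 < q then K q else 0.

Lemma measurable_K_pos (K : R -> R) :
  (forall q1 q2, 0 < q1 -> q1 <= q2 -> K q2 <= K q1) ->
  measurable_fun [set q : R | 0 < q] K.
Proof.
move=> hK.
apply: (measurability (@RGenCInfty.G R)) => [|/= _ [_] [r] -> <-].
  exact: RGenCInfty.measurableE.
apply: is_interval_measurable => s t /= [s0 Ks] [t0 Kt] u /andP[su ut].
split; first exact: (lt_le_trans s0 su).
move: Kt; rewrite /= !in_itv/= !andbT => Kt.
apply: (le_trans Kt); apply: hK => //; exact: (lt_le_trans s0 su).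
Qed.

Lemma measurable_Kz (K : R -> R) :
  (forall q1 q2, 0 < q1 -> q1 <= q2 -> K q2 <= K q1) ->
  measurable_fun setT (Kz K).
Proof.
move=> hK; apply: measurable_fun_if => //.
- by apply: measurable_fun_ltr.
- rewrite setTI (_ : _ @^-1` _ = [set q : R | 0 < q]); first exact: measurable_K_pos.
  by apply/seteqP; split => q /=.
Qed.
End Kz.
Arguments Kz {R}.
Arguments measurable_Kz {R}.

Section Mu.
Variables (R : realType) (d : nat).
Local Notation Rd := (Defs.Rd R d).
Local Open Scope ereal_scope.

Lemma set1_measurable (y : Rd) : measurable [set y].
Proof.
rewrite (_ : [set y] = (fun x : Rd => Defs.edist x y) @^-1` [set 0%R]).
  by rewrite -[X in measurable X]setTI; apply: measurable_edist.
apply/seteqP; split => x /=.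
  by move=> ->; rewrite edistxx.
by move/edist_eq0.
Qed.

Lemma mu_set1 (mu : {measure set Rd -> \bar R}) (hd : (0 < d)%N) :
  is_lebesgue_Rd mu -> forall y : Rd, mu [set y] = 0.
Proof.
move=> hmu y.
have := hmu y y (fun i => lexx _).
rewrite (_ : [set x : Rd | _] = [set y]); last first.
  apply/seteqP; split => x /=.
    move=> H; apply: eq_from_tnth => i; apply/esym/le_anti; exact: H.
  by move=> -> i; rewrite lexx.
move=> ->; rewrite (eq_bigr (fun=> 0%R)) => [|i _]; last by rewrite subrr.
by rewrite prodr_const card_ord expr0n; case: d hd.

Qed.

End Mu.

Section Esum.
Set Implicit Arguments.
Variables (R : realType) (d : nat).
Local Notation Rd := (Defs.Rd R d).
Local Open Scope ereal_scope.

Lemma fin_bound (F : set Rd) : finite_set F ->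
  exists n : nat, forall x, F x -> (Defs.enorm x <= n%:R)%R.
Proof.
move/finite_seqP => [s ->]; elim: s => [|a s [n IH]]; first by exists 0%N.
exists (maxn n (Num.trunc (Defs.enorm a)).+1) => x /=; rewrite in_cons.
move=> /orP[/eqP->|xs].
  apply: (le_trans (ltW (truncnS_gt _))); rewrite ler_nat; exact: leq_maxr.
apply: (le_trans (IH x xs)); rewrite ler_nat; exact: leq_maxl.
Qed.

Definition En (E : set Rd) (n : nat) := E `&` [set x | (Defs.enorm x <= n%:R)%R].

Lemma En_fin E n : Gamma E -> finite_set (En E n).
Proof. by move=> hE; exact: hE. Qed.

Lemma En_nd E (a : Rd -> \bar R) : Gamma E -> (forall y, 0 <= a y) ->
  {homo (fun n => \sum_(y \in En E n) a y) : n m / (n <= m)%N >-> n <= m}.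
Proof.
move=> hE a0 m n mn; apply: lee_fsum_nneg_subset; try exact: En_fin.
  move=> x; rewrite !inE => -[Ex xm]; split => //.
  by apply: (le_trans xm); rewrite ler_nat.
by move=> t _; exact: a0.
Qed.

Lemma esum_lim E (a : Rd -> \bar R) : Gamma E -> (forall y, 0 <= a y) ->
  \esum_(y in E) a y = limn (fun n => \sum_(y \in En E n) a y).
Proof.
move=> hE a0.
rewrite (cvg_lim _ (ereal_nondecreasing_cvgn (@En_nd E a hE a0))) //.
apply/le_anti/andP; split.
  apply: ge_ereal_sup => _ [A [finA AE] <-].
  have [n Hn] := fin_bound finA.
  apply: le_trans (ereal_sup_ubound (ex_intro2 _ _ n I erefl)).
  apply: lee_fsum_nneg_subset => //; first exact: En_fin.
    by move=> x; rewrite !inE => Ax; split; [exact: AE|exact: Hn].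
apply: ge_ereal_sup => _ [n _ <-].
apply: ereal_sup_ubound; exists (En E n) => //; split; first exact: En_fin.
by move=> x [].
Qed.

Lemma int_esum_le (mu : {measure set Rd -> \bar R}) E (f : Rd -> Rd -> \bar R) :
  Gamma E -> (forall y, measurable_fun setT (f y)) -> (forall y x, 0 <= f y x) ->
  \int[mu]_x (\esum_(y in E) f y x) <= \esum_(y in E) \int[mu]_x f y x.
Proof.
move=> hE mf f0.
have -> : (fun x => \esum_(y in E) f y x) =
   (fun x => limn (fun n => \sum_(y \in En E n) f y x)).
  by apply/funext => x; apply: esum_lim.
rewrite (@monotone_convergence _ _ _ mu setT measurableT
   (fun n x => \sum_(y \in En E n) f y x)); last 3 first.
- by move=> n; apply: emeasurable_fsum => //; exact: En_fin.
- by move=> n x _; apply: fsume_ge0 => y _.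
- by move=> x _; exact: En_nd.
have ifE n : \int[mu]_x (\sum_(y \in En E n) f y x) =
             \sum_(y \in En E n) \int[mu]_x f y x.
  apply: ge0_integral_fsum => //; try exact: En_fin.
under eq_fun do rewrite ifE.
apply: lime_le.
  apply: ereal_nondecreasing_is_cvgn; apply: En_nd => // y.
  exact: integral_ge0.
apply: nearW => n; apply: ereal_sup_ubound; exists (En E n) => //.
by split; [exact: En_fin|move=> x []].
Qed.

End Esum.

Lemma split1 (R : realType) (T : choiceType) (A : set T) (a : T -> \bar R) x :
  A x -> (forall y, A y -> (0 <= a y)%E) ->
  \esum_(y in A) a y = (a x + \esum_(y in A `\ x) a y)%E.
Proof.
move=> Ax a0; rewrite (esumID [set x]) //.
rewrite (_ : A `&` [set x] = [set x]); last first.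
  by apply/seteqP; split => y /=; [case|move=> ->].
by rewrite esum_set1 ?setDE //; exact: a0.
Qed.

Section Walg.
Variables (R : realType) (d : nat).
Local Notation Rd := (Defs.Rd R d).
Variables (phi : Rd -> R) (K : R -> R).
Hypothesis hphi : forall x, 0 < phi x.
Hypothesis hK : forall q, 0 < q -> 0 < K q.
Local Open Scope ereal_scope.

Definition ps (x y : Rd) : \bar R := (Defs.psi phi K x y)%:E.

Lemma ps_ge0 x y : x <> y -> 0 <= ps x y.
Proof.
move=> xy; rewrite lee_fin /Defs.psi; apply: mulr_ge0; first by apply: mulr_ge0; exact: ltW.
apply/ltW/hK; rewrite lt_neqAle edist_ge0 andbT; apply/eqP => /esym/edist_eq0.
exact: xy.
Qed.

Lemma ps_sym x y : ps x y = ps y x.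
Proof. by rewrite /ps /Defs.psi edist_sym [(phi x * _)%R]mulrC. Qed.

Definition sE (E : set Rd) x := \esum_(y in E `\ x) ps x y.
Definition SS (E : set Rd) := \esum_(x in E) sE E x.

Lemma sE_ge0 E x : 0 <= sE E x.
Proof. by apply: esum_ge0 => y [_ yx]; apply: ps_ge0 => /esym. Qed.

Lemma SS_ge0 E : 0 <= SS E.
Proof. by apply: esum_ge0 => x _; exact: sE_ge0. Qed.

Lemma pairsE E : \esum_(p in [set p : Rd * Rd | E p.1 /\ E p.2 /\ p.1 <> p.2]) ps p.1 p.2
   = SS E.
Proof.
rewrite /SS /sE esum_esum; last first.
  by move=> i j _ [_ ji]; apply: ps_ge0 => /esym.
congr esum; apply/seteqP; split => -[a b] /=.
  by move=> [Ea [Eb ab]]; split => //; split => // /esym.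
by move=> [Ea [Eb ba]]; split => //; split => // /esym.
Qed.

Lemma SS_split E x : E x -> SS E = sE E x + sE E x + SS (E `\ x).
Proof.
move=> Ex; rewrite /SS (@split1 _ _ E _ x Ex); last by move=> *; exact: sE_ge0.
rewrite -addeA; congr (_ + _).
rewrite (eq_esum (b := fun a => ps x a + sE (E `\ x) a)); last first.
  move=> a [Ea ax]; rewrite /sE (@split1 _ _ (E `\ a) _ x); last first.
    by move=> y [_ ya]; apply: ps_ge0 => /esym.
    by split => // /esym.
  rewrite ps_sym; congr (_ + esum _ _).
  by apply/seteqP; split => y /= [[]].
rewrite esumD; last 2 first.
  by move=> a [_ ax]; apply: ps_ge0 => /esym.
  by move=> *; exact: sE_ge0.
by [].
Qed.

End Walg.

Lemma esumZ (R : realType) (T : choiceType) (A : set T) (a : T -> \bar R) (c : R) :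
  (0 <= c)%R -> (forall y, (0 <= a y)%E) ->
  \esum_(y in A) (c%:E * a y)%E = (c%:E * \esum_(y in A) a y)%E.
Proof.
move=> c0 a0; rewrite /esum -ereal_supZl //; last first.
  by apply/set0P; exists (\sum_(y \in set0) a y); exists set0 => //; exact: fsets_set0.
congr ereal_sup; apply/seteqP; split => _ [F hF <-].
  by exists (\sum_(y \in F) a y); [exists F|rewrite ge0_mule_fsumr].
move: hF => [G hG <-]; by exists G => //; rewrite ge0_mule_fsumr.
Qed.

Lemma measurable_esum (R : realType) (d : nat) (E : set (Defs.Rd R d))
  (f : Defs.Rd R d -> Defs.Rd R d -> \bar R) :
  Gamma E -> (forall y, measurable_fun setT (f y)) -> (forall y x, (0 <= f y x)%E) ->
  measurable_fun setT (fun x => \esum_(y in E) f y x).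
Proof.
move=> hE mf f0.
apply: (emeasurable_fun_cvg (fun n x => \sum_(y \in En E n) f y x)).
  by move=> n; apply: emeasurable_fsum => //; exact: En_fin.
move=> x _; rewrite (@esum_lim _ _ E (f ^~ x)) //.
apply: ereal_nondecreasing_is_cvgn; exact: En_nd.
Qed.

Lemma le_integral_nm d' (T : measurableType d') (R : realType)
  (mu : {measure set T -> \bar R}) (f g : T -> \bar R) :
  (forall x, (0 <= f x)%E) -> (forall x, (f x <= g x)%E) ->
  (\int[mu]_x f x <= \int[mu]_x g x)%E.
Proof.
move=> f0 fg.
have g0 x : (0 <= g x)%E by exact: le_trans (f0 x) (fg x).
rewrite !ge0_integralTE //; apply: ereal_sup_le => _ [h hf <-].
by exists h => // x; exact: le_trans (hf x) (fg x).
Qed.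

Section C1cmp.
Variables (R : realType) (d : nat).
Local Notation Rd := (Defs.Rd R d).
Local Open Scope ereal_scope.

Lemma intKz_le (mu : {measure set Rd -> \bar R}) (phi : Rd -> R) (K : R -> R) :
  (0 < d)%N -> is_lebesgue_Rd mu -> (forall x, (0 < phi x)%R) ->
  (forall q, (0 < q)%R -> (0 < K q)%R) -> forall y : Rd,
  \int[mu]_x (phi x * Kz K (Defs.edist x y))%:E <=
  \int[mu]_x (phi x * K (Defs.edist y x))%:E.
Proof.
move=> hd hmu hphi hK y.
set F := fun x => (phi x * K (Defs.edist y x))%:E.
have Fpos x : x <> y -> 0 <= F x.
  move=> xy; rewrite lee_fin; apply: mulr_ge0; first exact: ltW.
  apply/ltW/hK; rewrite lt_neqAle edist_ge0 andbT; apply/eqP => /esym/edist_eq0.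
  by move=> /esym.
have negle x : F^\- x <= ((Num.max (- (phi y * K 0)) 0)%R * \1_[set y] x)%:E.
  rewrite funenegE; have [->|xy] := pselect (x = y).
    rewrite indicE mem_set // mulr1 /F edistxx ge_max; apply/andP; split.
      by rewrite -EFinN lee_fin le_max lexx.
    by rewrite lee_fin le_max lexx orbT.
  rewrite indicE memNset // mulr0 ge_max lexx andbT leeNl oppe0.
  exact: Fpos.
have negint : \int[mu]_x F^\- x = 0.
  apply/le_anti/andP; split; last by apply: integral_ge0 => x _; exact: funeneg_ge0.
  apply: (le_trans (@le_integral_nm _ _ _ mu _ _ (fun x => funeneg_ge0 F x) negle)).
  under eq_integral do rewrite EFinM.
  rewrite ge0_integralZl_EFin //; last by rewrite le_max lexx orbT.
  - rewrite integral_indic //; last exact: set1_measurable.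
    by rewrite setIT (@mu_set1 R d mu hd hmu) mule0.
  - by apply/measurable_EFinP; apply: measurable_indic; exact: set1_measurable.
rewrite [leRHS]integralE negint sube0.
apply: le_integral_nm.
  move=> x; rewrite lee_fin /Kz; case: ifPn => q0; last by rewrite mulr0.
  by apply: mulr_ge0; [exact: ltW|exact/ltW/hK].
move=> x; rewrite funeposE le_max; apply/orP.
have [->|xy] := pselect (x = y).
  by right; rewrite edistxx /Kz ltxx mulr0.
left; rewrite /F /Kz edist_sym; case: ifPn => // /negP; rewrite lt_neqAle edist_ge0 andbT.
by move=> /negP/negPn/eqP/esym/edist_eq0 /esym.
Qed.

End C1cmp.

Theorem lemma4p10 (R : realType) (d : nat) (hd : (0 < d)%N) (eps : R) (heps : 0 < eps)
  (mu : {measure set (Rd R d) -> \bar R}) (hmu : is_lebesgue_Rd mu)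
  (b : Rd R d -> set (Rd R d) -> R)
  (hb_meas : forall eta, GammaG eps eta -> measurable_fun setT (fun x => b x eta))
  (hb_ge0 : forall x eta, GammaG eps eta -> 0 <= b x eta)
  (hb_bnd : (bsup eps b < +oo)%E)
  (K : R -> R)
  (hK_pos : forall q, 0 < q -> 0 < K q)
  (hK_noninc : forall q1 q2, 0 < q1 -> q1 <= q2 -> K q2 <= K q1)
  (hK_0 : K q @[q --> 0^'+] --> +oo)
  (hK_int : forall r, 0 < r ->
     (\int[lebesgue_measure]_(q in `[r, +oo[) (K q * q ^+ d.-1)%:E < +oo)%E)
  (phi h : Rd R d -> R)
  (hphi_meas : measurable_fun setT phi) (hh_meas : measurable_fun setT h)
  (hphi_pos : forall x, 0 < phi x) (hh_pos : forall x, 0 < h x)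
  (hphi_sep : forall r : R, exists2 c : R, 0 < c & forall x, enorm x <= r -> c <= phi x)
  (hh_sep : forall r : R, exists2 c : R, 0 < c & forall x, enorm x <= r -> c <= h x)
  (hC1 : (C1 mu phi K < +oo)%E)
  (hh_lb : forall x, (2%:E * C1 mu phi K * bsup eps b * (phi x)%:E <= (h x)%:E)%E)
  (hh_ub : forall x, h x <= Gfun eps x) :
  forall eta, Theta eps phi K eta ->
    (Lgen mu b (Wfun h phi K) eta
       <= bsup eps b * \int[mu]_x (h x)%:E - (2^-1)%:E * Wfun h phi K eta)%E.
Proof.
move=> eta [[hGam hGfin] hV].
have hGG : GammaG eps eta by [].
pose x0 : Rd R d := nseq_tuple d 0%R.
have bub x : ((b x eta)%:E <= bsup eps b)%E.
  by apply: ereal_sup_ubound; exists x, eta.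
have G0 : GammaG eps set0.
  split; last by rewrite esum_set0.
  by move=> r; rewrite set0I.
have bs0 : (0 <= bsup eps b)%E.
  apply: le_trans (ereal_sup_ubound _); last by exists x0, set0.
  by rewrite lee_fin; exact: hb_ge0.
have bsfin : bsup eps b \is a fin_num by rewrite ge0_fin_numE.
set bs := fine (bsup eps b).
have bsE : bsup eps b = bs%:E by rewrite fineK.
have bs0' : 0 <= bs by rewrite -lee_fin -bsE.
have C1ge y : (\int[mu]_x (phi x * Kz K (Defs.edist x y))%:E <= C1 mu phi K)%E.
  apply: le_trans (@intKz_le R d mu phi K hd hmu hphi_pos hK_pos y) _.
  by apply: ereal_sup_ubound; exists y.
have C10 : (0 <= C1 mu phi K)%E.
  apply: le_trans (C1ge x0); apply: integral_ge0 => x _.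
  rewrite lee_fin /Kz; case: ifPn => q0; last by rewrite mulr0.
  by apply: mulr_ge0; [exact: ltW|exact/ltW/hK_pos].
have C1fin : C1 mu phi K \is a fin_num by rewrite ge0_fin_numE.
set c := fine (C1 mu phi K).
have cE : C1 mu phi K = c%:E by rewrite fineK.
have c0 : 0 <= c by rewrite -lee_fin -cE.
have h0 x : (0 <= (h x)%:E)%E by rewrite lee_fin ltW.
have VE E : Vfun phi K E = ((2^-1)%:E * SS phi K E)%E.
  by rewrite /Vfun -(pairsE phi K hphi_pos hK_pos E).
have WE E : Wfun h phi K E = (pairing h E + (2^-1)%:E * SS phi K E)%E.
  by rewrite /Wfun VE.
have Hfin : (pairing h eta < +oo)%E.
  apply: le_lt_trans hGfin; apply: le_esum => x _; rewrite lee_fin; exact: hh_ub.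
have H0 E : (0 <= pairing h E)%E by apply: esum_ge0 => x _.
have S0 E : (0 <= SS phi K E)%E by exact: SS_ge0.
have Sfin : (SS phi K eta < +oo)%E.
  move: hV; rewrite VE; move: (S0 eta); case: (SS phi K eta) => [r _ _|_|//]; first by rewrite ltry.
  by rewrite mulry gtr0_sg ?mul1e ?ltxx // invr_gt0.
have fE x : eta x ->
    (Wfun h phi K (eta `\ x) - Wfun h phi K eta)%E = (- ((h x)%:E + sE phi K eta x))%E.
  move=> ex; rewrite !WE /pairing (@split1 _ _ eta _ x ex) //.
  rewrite (SS_split phi K hphi_pos hK_pos eta x ex).
  set a := (h x)%:E; set Hp := esum _ _; set s := sE _ _ _ _; set Sp := SS _ _ _.
  have Hpf : Hp \is a fin_num.
    rewrite ge0_fin_numE; last exact: H0.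
    apply: le_lt_trans Hfin; rewrite /pairing (@split1 _ _ eta _ x ex) //.
    by rewrite leeDr.
  have Ssum : (s + s + Sp < +oo)%E by rewrite -(SS_split phi K hphi_pos hK_pos eta x ex).
  have sf : s \is a fin_num.
    rewrite ge0_fin_numE; last exact: (sE_ge0 phi K hphi_pos hK_pos).
    apply: le_lt_trans Ssum; rewrite -addeA leeDl //.
    by apply: adde_ge0; [exact: (sE_ge0 phi K hphi_pos hK_pos)|exact: S0].
  have Spf : Sp \is a fin_num.
    rewrite ge0_fin_numE; last exact: S0.
    apply: le_lt_trans Ssum; rewrite leeDr //.
    by apply: adde_ge0; exact: (sE_ge0 phi K hphi_pos hK_pos).
  rewrite -(fineK Hpf) -(fineK sf) -(fineK Spf) /a.
  do ![rewrite -EFinD | rewrite -EFinM | rewrite -EFinB | rewrite -EFinN]; congr EFin.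
  lra.
have sEge x : (0 <= sE phi K eta x)%E by exact: (sE_ge0 phi K hphi_pos hK_pos).
have ssumE : ssum eta (fun x => Wfun h phi K (eta `\ x) - Wfun h phi K eta)%E
    = (- (pairing h eta + SS phi K eta))%E.
  rewrite /ssum esum1; last first.
    move=> x ex; rewrite funeposE fE // max_r // oppe_le0.
    exact: adde_ge0.
  rewrite (eq_esum (b := fun x => (h x)%:E + sE phi K eta x)%E); last first.
    move=> x ex; rewrite funenegE fE // oppeK max_l //.
    exact: adde_ge0.
  by rewrite esumD // sub0e.
pose kf (y x : Rd R d) := (phi x * phi y * Kz K (Defs.edist x y))%:E.
have kf0 y x : (0 <= kf y x)%E.
  rewrite lee_fin /Kz; case: ifPn => q0; last by rewrite mulr0.
  by apply: mulr_ge0; [apply: mulr_ge0; exact: ltW|exact/ltW/hK_pos].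
pose k x := \esum_(y in eta) kf y x.
have k0 x : (0 <= k x)%E by apply: esum_ge0.
have Wfin : Wfun h phi K eta \is a fin_num.
  rewrite WE fin_numD; apply/andP; split; first by rewrite ge0_fin_numE.
  by rewrite fin_numM // ge0_fin_numE.
pose g x := ((b x eta)%:E * (Wfun h phi K (eta `|` [set x]) - Wfun h phi K eta))%E.
have gb x : (0 <= g x)%E /\ (g x <= bs%:E * ((h x)%:E + k x))%E.
  have bx0 : (0 <= (b x eta)%:E)%E by rewrite lee_fin; exact: hb_ge0.
  have rhs0 : (0 <= bs%:E * ((h x)%:E + k x))%E.
    by apply: mule_ge0; [rewrite lee_fin|exact: adde_ge0].
  have [ex|nex] := pselect (eta x).
    rewrite /g (_ : eta `|` [set x] = eta); last first.
      by apply/seteqP; split => y /=; [case => // ->|left].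
    by rewrite subee // mule0; split.
  set E' := eta `|` [set x].
  have E'x : E' x by right.
  have E'D : E' `\ x = eta.
    apply/seteqP; split => y /=; first by case=> -[] // ->.
    by move=> ey; split; [left|move=> yx; apply: nex; rewrite -yx].
  have sEk : sE phi K E' x = k x.
    rewrite /sE E'D; apply: eq_esum => y ey.
    rewrite /ps /kf /Defs.psi /Kz edist_sym; case: ifPn => // /negP; rewrite lt_neqAle edist_ge0 andbT.
    by move=> /negP/negPn/eqP/esym/edist_eq0 yx; exfalso; apply: nex; rewrite -yx.
  have diffE : (Wfun h phi K E' - Wfun h phi K eta)%E = ((h x)%:E + k x)%E.
    rewrite !WE /pairing (@split1 _ _ E' _ x E'x) // E'D.
    rewrite (SS_split phi K hphi_pos hK_pos E' x E'x) E'D sEk.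
    have Hf : pairing h eta \is a fin_num by rewrite ge0_fin_numE.
    have Sf : SS phi K eta \is a fin_num by rewrite ge0_fin_numE.
    rewrite /pairing in Hf.
    rewrite -(fineK Hf) -(fineK Sf).
    have [kfin|kinf] := boolP (k x \is a fin_num).
      rewrite -(fineK kfin).
      do ![rewrite -EFinD | rewrite -EFinM | rewrite -EFinB | rewrite -EFinN]; congr EFin.
      lra.
    have -> : k x = +oo%E.
      by move: kinf; rewrite ge0_fin_numE // ltey negbK => /eqP.
    rewrite addye //.
    rewrite mulry gtr0_sg; last by rewrite invr_gt0.
    rewrite mul1e addey // addye // addey //.
  rewrite /g diffE; split; first by apply: mule_ge0 => //; exact: adde_ge0.
  by apply: lee_pmul => //; [exact: adde_ge0|rewrite -bsE].
have mh : measurable_fun setT (fun x => (h x)%:E) by apply/measurable_EFinP.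
have mkf y : measurable_fun setT (kf y).
  apply/measurable_EFinP; apply: measurable_funM.
    by apply: measurable_funM => //; exact: measurable_cst.
  apply: measurableT_comp; first exact: (measurable_Kz K hK_noninc).
  exact: measurable_edist.
have mk : measurable_fun setT k by apply: (measurable_esum kf hGam mkf kf0).
have intk : (\int[mu]_x k x <= \esum_(y in eta) (phi y * c)%:E)%E.
  apply: le_trans (int_esum_le mu kf hGam mkf kf0) _.
  apply: le_esum => y _.
  have -> : (\int[mu]_x kf y x = (phi y)%:E * \int[mu]_x (phi x * Kz K (Defs.edist x y))%:E)%E.
    rewrite -ge0_integralZl_EFin //; last exact: ltW.
      apply: eq_integral => x _; rewrite /kf -EFinM; congr EFin.
      by rewrite mulrAC mulrC.
    - move=> x _; rewrite lee_fin /Kz; case: ifPn => q0; last by rewrite mulr0.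
      by apply: mulr_ge0; [exact: ltW|exact/ltW/hK_pos].
    - apply/measurable_EFinP; apply: measurable_funM => //.
      apply: measurableT_comp; first exact: (measurable_Kz K hK_noninc).
      exact: measurable_edist.
  rewrite EFinM -cE; apply: lee_pmul => //; first by rewrite lee_fin ltW.
  apply: integral_ge0 => x _; rewrite lee_fin /Kz; case: ifPn => q0; last by rewrite mulr0.
  by apply: mulr_ge0; [exact: ltW|exact/ltW/hK_pos].
have intg : (\int[mu]_x g x <= bs%:E * \int[mu]_x (h x)%:E + (2^-1)%:E * pairing h eta)%E.
  apply: le_trans (le_integral_nm mu g (fun x => bs%:E * ((h x)%:E + k x))%E
     (fun x => (gb x).1) (fun x => (gb x).2)) _.
  rewrite ge0_integralZl_EFin //; last 2 first.
    by move=> x _; exact: adde_ge0.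
    exact: emeasurable_funD.
  rewrite ge0_integralD // ge0_muleDr; last 2 first.
    by apply: integral_ge0.
    by apply: integral_ge0.
  apply: leeD => //.
  apply: (@le_trans _ _ (bs%:E * \esum_(y in eta) (phi y * c)%:E)%E).
    apply: lee_pmul => //.
    exact: integral_ge0.
  rewrite -esumZ //; last by move=> y; rewrite lee_fin; apply: mulr_ge0 => //; exact: ltW.
  rewrite /pairing -esumZ //.
  apply: le_esum => y _; rewrite -!EFinM lee_fin.
  have := hh_lb y; rewrite cE bsE -!EFinM lee_fin => H2.
  lra.
rewrite /Lgen ssumE.
apply: le_trans (leeD (lexx _) intg) _.
rewrite bsE WE.
have Hf : pairing h eta \is a fin_num by rewrite ge0_fin_numE.
have Sf : SS phi K eta \is a fin_num by rewrite ge0_fin_numE.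
have J0 : (0 <= bs%:E * \int[mu]_x (h x)%:E)%E.
  by apply: mule_ge0; [rewrite lee_fin|exact: integral_ge0].
have [Jf|Jinf] := boolP ((bs%:E * \int[mu]_x (h x)%:E)%E \is a fin_num).
  have S0' : 0 <= fine (SS phi K eta) by apply: fine_ge0.
  have H0' : 0 <= fine (pairing h eta) by apply: fine_ge0.
  move: Jf Hf Sf S0' H0'.
  set J := (bs%:E * _)%E; set Hv := pairing h eta; set Sv := SS phi K eta.
  move=> Jf Hf Sf S0' H0'.
  rewrite -(fineK Jf) -(fineK Hf) -(fineK Sf).
  do ![rewrite -EFinD | rewrite -EFinM | rewrite -EFinB | rewrite -EFinN].
  rewrite lee_fin; lra.
have -> : (bs%:E * \int[mu]_x (h x)%:E)%E = +oo%E.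
  by move: Jinf; rewrite ge0_fin_numE // ltey negbK => /eqP.
have nNy (v : \bar R) : v \is a fin_num -> v != -oo%E.
  by rewrite fin_numE => /andP[].
rewrite addye; last by apply: nNy; rewrite fin_numM.
rewrite addey; last by apply: nNy; rewrite fin_numN fin_numD Hf Sf.
rewrite addye ?leey //; apply: nNy.
by rewrite fin_numN fin_numM // fin_numD Hf fin_numM.
Qed.
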